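(* Let $\mathrm{X}=(X_n)_{n\ge1}$ be a sequence of random variables in $\mathbb{T}$, each distributed according to Lebesgue measure (no assumption on their joint law), and let $\mathrm{r}=(r_n)_{n\ge1}$ be a sequence of reals in $(0,1]$. Let $G$ be a nonempty compact subset of $\mathbb{T}$ and let $g$ be a doubling gauge function with $P^g(G)<\infty$. Then: (1) if $\sum_{n=1}^\infty \frac{r_n}{g(r_n)}<\infty$, then almost surely $\mathcal{E}(\mathrm{X},\mathrm{r})\cap G=\emptyset$; (2) for any doubling gauge function $h$, if $\sum_{n=1}^\infty\frac{h(r_n)r_n}{g(r_n)}<\infty$, then almost surely $\mathcal{H}^h(\mathcal{E}(\mathrm{X},\mathrm{r})\cap G)=0$.
   Context: $\mathbb{T}=\mathbb{R}/\mathbb{Z}$ with quotient distance $d$. $\mathcal{E}(\mathrm{X},\mathrm{r})=\{\xi\in\mathbb{T}: d(\xi,X_n)<r_n\text{ for infinitely many }n\ge1\}$. A gauge function is a nondecreasing right-continuous function on $[0,\infty)$ vanishing at zero and only at zero; it is doubling if $g(2r)\le Cg(r)$ for all $r>0$ and some $C>0$. $\mathcal{H}^h$ is the Hausdorff $h$-measure. The packing premeasure is $P^g(E)=\lim_{\delta\downarrow0}P^g_\delta(E)$, where $P^g_\delta(E)=\sup\sum_n g(\mathrm{diam}\,B_n)$, the supremum being over all sequences of disjoint closed balls (arcs) centered in $E$ with diameter less than $\delta$. *)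

(* Defs.v *)
From HB Require Import structures.
From mathcomp Require Import all_boot all_order all_algebra.
From mathcomp Require Import all_classical all_reals all_analysis.
Set Implicit Arguments. Unset Strict Implicit. Unset Printing Implicit Defensive.
Import Order.TTheory GRing.Theory Num.Theory.
Import numFieldNormedType.Exports.
Local Open Scope classical_set_scope.
Local Open Scope ring_scope.

(* The circle T = R/Z is represented by R, points differing by an integer
   being identified; dT is the quotient distance (distance of x - y to Z). *)
Section Torus.
Variable R : realType.

Definition fracR (z : R) : R := z - (Num.floor z)%:~R.

Definition dT (x y : R) : R := Num.min (fracR (x - y)) (1 - fracR (x - y)).

(* diameter (w.r.t. dT) of a set; dT is bounded by 1/2 so sup is finite *)
Definition diamT (A : set R) : R := sup [set dT p.1 p.2 | p in A `*` A].

Definition ballT (x rho : R) : set R := [set y | dT x y <= rho].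

Definition Eset (X : nat -> R) (r : nat -> R) : set R :=
  [set xi | forall N, exists n, (N <= n)%N /\ dT xi (X n) < r n].

Definition gauge (g : R -> R) : Prop :=
  [/\ (forall x y, 0 <= x -> x <= y -> g x <= g y),
      (forall x, 0 <= x -> g y @[y --> x^'+] --> g x),
      g 0 = 0 &
      (forall x, 0 <= x -> g x = 0 -> x = 0)].

Definition doubling (g : R -> R) : Prop :=
  exists C : R, 0 < C /\ forall r, 0 < r -> g (2 * r) <= C * g r.

Definition hausdorff_delta (h : R -> R) (delta : R) (A : set R) : \bar R :=
  ereal_inf [set (\sum_(0 <= i <oo) (h (diamT (U i)))%:E)%E
            | U in [set U : nat -> set R |
                    A `<=` \bigcup_i U i /\ forall i, diamT (U i) <= delta]].

Definition hausdorff_measure (h : R -> R) (A : set R) : \bar R :=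
  ereal_sup [set hausdorff_delta h delta A | delta in [set delta : R | 0 < delta]].

(* packing premeasure: P^g_delta(E) is the sup of sum g(diam B_i) over
   (finite or countable) families of pairwise disjoint closed balls
   centered in E with diameter < delta; P^g(E) = lim_{delta -> 0+}, which
   (P^g_delta being nondecreasing in delta) is the inf over delta > 0. *)
Definition packing_delta (g : R -> R) (delta : R) (E : set R) : \bar R :=
  ereal_sup [set s | exists (I : set nat) (c rho : nat -> R),
     [/\ (forall i, I i -> [/\ E (c i), 0 < rho i & diamT (ballT (c i) (rho i)) < delta]),
         (forall i j, I i -> I j -> i <> j ->
            ballT (c i) (rho i) `&` ballT (c j) (rho j) = set0) &
         s = \esum_(i in I) (g (diamT (ballT (c i) (rho i))))%:E]].

Definition packing_premeasure (g : R -> R) (E : set R) : \bar R :=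
  ereal_inf [set packing_delta g delta E | delta in [set delta : R | 0 < delta]].

End Torus.

(* Main.v *)
Require Import Defs.
From HB Require Import structures.
From mathcomp Require Import all_boot all_order all_algebra.
From mathcomp Require Import all_classical all_reals all_analysis.
From mathcomp Require Import measurable_realfun.
From mathcomp Require Import zify ring lra.
Import Order.TTheory GRing.Theory Num.Theory.
Import numFieldNormedType.Exports.
Local Open Scope classical_set_scope.
Local Open Scope ring_scope.

Set Implicit Arguments. Unset Strict Implicit. Unset Printing Implicit Defensive.

Lemma eqW' {d} {T : porderType d} (x y : T) : x = y -> (x <= y)%O.
Proof. by move=> ->. Qed.

Section Metric.
Variable R : realType.
Implicit Types x y z t : R.

Lemma fracR_ge0 t : 0 <= fracR t.
Proof. by rewrite /fracR subr_ge0 Num.Theory.floor_le. Qed.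

Lemma fracR_lt1 t : fracR t < 1.
Proof. rewrite /fracR; have := floorD1_gt t; rewrite intrD /=; lra. Qed.

Lemma dT_ge0 x y : 0 <= dT x y.
Proof.
rewrite /dT; have := fracR_ge0 (x - y); have := fracR_lt1 (x - y).
rewrite /Num.min; case: ifP => _ ? ?; lra.
Qed.

Lemma dT_le_half x y : dT x y <= 2^-1.
Proof.
rewrite /dT; have := fracR_ge0 (x - y); have := fracR_lt1 (x - y).
rewrite /Num.min; case: ifP => H ? ?.
- move: H; set f := fracR _ => H. have : f < 1 - f by []. lra.
- move: H; set f := fracR _ => /negbT; rewrite -leNgt => H; lra.
Qed.

Lemma dT_le x y (k : int) : dT x y <= `|x - y - k%:~R|.
Proof.
rewrite /dT /fracR; set t := x - y.
have Hf := floor_le t; have Hf1 := floorD1_gt t.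
have Hm : t - k%:~R = (t - (Num.floor t)%:~R) + (Num.floor t - k)%:~R.
  by rewrite intrB; ring.
rewrite Hm; set f := t - _.
have [m0|m0] := lerP 0 (Num.floor t - k).
- have : 0 <= (Num.floor t - k)%:~R :> R by rewrite ler0z.
  move=> h; rewrite ger0_norm; last by rewrite /f; lra.
  rewrite ge_min; rewrite /f; apply/orP; left; lra.
- have : (Num.floor t - k)%:~R <= -1 :> R.
    have : Num.floor t - k <= -1 by lia.
    by rewrite -(ler_int R) => /le_trans; apply; rewrite rmorphN /= rmorph1.
  move=> h.
  have f1 : f < 1 by rewrite /f; move: Hf1; rewrite intrD /= => ?; lra.
  rewrite ler0_norm; last by rewrite /f; lra.
  rewrite ge_min; apply/orP; right; rewrite /f; lra.
Qed.

Lemma dT_eq x y : exists k : int, dT x y = `|x - y - k%:~R|.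
Proof.
rewrite /dT /fracR; set t := x - y.
have Hf := floor_le t; have Hf1 := floorD1_gt t; rewrite intrD /= in Hf1.
rewrite /Num.min; case: ifP => H.
- exists (Num.floor t); rewrite ger0_norm //; lra.
- exists (Num.floor t + 1); rewrite intrD /= ler0_norm; first ring. lra.
Qed.

Lemma dTC x y : dT x y = dT y x.
Proof.
apply/eqP; rewrite eq_le; apply/andP; split.
- have [k ->] := dT_eq y x; apply: le_trans (dT_le x y (- k)) _.
  by rewrite -normrN rmorphN /=; apply/eqW'; congr `|_|; ring.
- have [k ->] := dT_eq x y; apply: le_trans (dT_le y x (- k)) _.
  by rewrite -normrN rmorphN /=; apply/eqW'; congr `|_|; ring.
Qed.

Lemma dT_tri x y z : dT x z <= dT x y + dT y z.
Proof.
have [k1 ->] := dT_eq x y; have [k2 ->] := dT_eq y z.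
apply: le_trans (dT_le x z (k1 + k2)) _.
rewrite intrD /=; apply: le_trans (ler_normD _ _); apply/eqW'; congr `|_|; ring.
Qed.

Lemma dT_xx x : dT x x = 0.
Proof.
apply/eqP; rewrite eq_le dT_ge0 andbT.
by apply: le_trans (dT_le x x 0) _; rewrite subrr subr0 normr0.
Qed.

Lemma dT_le_abs x y : dT x y <= `|x - y|.
Proof. by apply: le_trans (dT_le x y 0) _; rewrite subr0. Qed.

Lemma dT_shift x t : `|t| <= 2^-1 -> dT x (x + t) = `|t|.
Proof.
move=> ht; apply/eqP; rewrite eq_le; apply/andP; split.
  by apply: le_trans (dT_le_abs _ _) _; rewrite opprD addrA subrr sub0r normrN.
have [k ->] := dT_eq x (x + t).
have -> : x - (x + t) - k%:~R = - (t + k%:~R) by ring.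
rewrite normrN.
have [k0|k0] := eqVneq k 0; first by rewrite k0 addr0.
have : 1 <= `|k%:~R : R|.
  by rewrite -intr_norm -[1](@mulr1z R) ler_int; move: k0; lia.
move=> hk; have := lerB_normD (k%:~R : R) t.
move=> h; rewrite [t + _]addrC; lra.
Qed.

Lemma diamT_le (A : set R) s : 0 <= s ->
  (forall x y, A x -> A y -> dT x y <= s) -> diamT A <= s.
Proof.
move=> s0 H; rewrite /diamT.
set S := [set _ | _ in _].
have [->|ne] := eqVneq S set0; first by rewrite sup0.
apply: ge_sup; first exact/set0P.
by move=> _ [[a b] [/= Aa Ab] <-]; exact: H.
Qed.

Lemma diamT_ge (A : set R) x y : A x -> A y -> dT x y <= diamT A.
Proof.
move=> Ax Ay; rewrite /diamT; apply: ub_le_sup.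
  by exists 2^-1 => _ [[a b] _ <-]; exact: dT_le_half.
by exists (x, y).
Qed.

Lemma diamT_ge0 (A : set R) : 0 <= diamT A.
Proof.
rewrite /diamT; set S := [set _ | _ in _].
have [->|/set0P [z Sz]] := eqVneq S set0; first by rewrite sup0.
case: Sz => [[a b] [Aa Ab] _]; apply: le_trans (dT_ge0 a b) _.
exact: diamT_ge.
Qed.

Lemma diamT_ball_le (c rho : R) : 0 <= rho -> diamT (ballT c rho) <= 2 * rho.
Proof.
move=> r0; apply: diamT_le; first lra.
move=> a b; rewrite /ballT /= => ha hb.
apply: le_trans (dT_tri a c b) _; rewrite dTC; lra.
Qed.

Lemma diamT_ball_ge (c rho : R) : 0 <= rho -> rho <= 2^-1 -> rho <= diamT (ballT c rho).
Proof.
move=> r0 r1.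
have e : dT c (c + rho) = rho by rewrite dT_shift ?ger0_norm.
rewrite -{1}e; apply: diamT_ge; rewrite /ballT /=.
  by rewrite dT_xx.
by rewrite e.
Qed.
End Metric.


Section Balls.
Variable R : realType.

Definition Sball (c s : R) : set R := [set x | dT x c < s].

Lemma Sball_bigcup (c s : R) : Sball c s =
  \bigcup_(k in [set: nat]) ([set` `]c + k%:R - s, c + k%:R + s[] `|`
                             [set` `]c - k%:R - s, c - k%:R + s[]).
Proof.
apply/seteqP; split => x /=.
- rewrite /Sball /= => h; have [k hk] := dT_eq x c; rewrite hk ltr_norml in h.
  case: k hk h => n hk h.
  + exists n => //; left; rewrite /= in_itv /=; apply/andP; split; lra.
  + exists n.+1 => //; right; rewrite /= in_itv /=.
    move: h; rewrite NegzE rmorphN /= => h; apply/andP; split; lra.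
- move=> [n _ [|]]; rewrite /= in_itv /= => /andP [h1 h2]; rewrite /Sball /=.
  + apply: le_lt_trans (dT_le x c n) _; rewrite ltr_norml; apply/andP; split; lra.
  + apply: le_lt_trans (dT_le x c (- n%:Z)) _; rewrite rmorphN /=.
    rewrite ltr_norml; apply/andP; split; lra.
Qed.

Lemma Sball_measurable (c s : R) : measurable (Sball c s).
Proof.
rewrite Sball_bigcup; apply: bigcup_measurable => k _.
by apply: measurableU; exact: measurable_itv.
Qed.


Lemma leb_itv_oo (a b : R) : a <= b ->
  (lebesgue_measure ([set` `]a, b[] : set R) = (b - a)%:E)%E.
Proof.
move=> ab; rewrite lebesgue_measure_itv /=.
rewrite lte_fin; have [lt|ge] := ltP a b; first by [].
have -> : b = a by apply/eqP; rewrite eq_le ge ab.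
by rewrite subrr.
Qed.

Lemma Sball_leb (c s : R) : 0 < s -> s <= 1 ->
  (lebesgue_measure (Sball c s `&` `[0%R, 1%R[) <= (6 * s)%:E)%E.
Proof.
move=> s0 s1.
set c0 := fracR c.
set J := fun a : R => ([set` `]a - s, a + s[] : set R).
have sub : Sball c s `&` `[0%R, 1%R[ `<=` J (c0 - 1) `|` J c0 `|` J (c0 + 1).
  move=> x [/= hx]; rewrite in_itv /= => /andP [x0 x1].
  have [k hk] := dT_eq x c; rewrite /Sball /= hk in hx.
  have c00 : 0 <= c0 := fracR_ge0 c.
  have c01 : c0 < 1 := fracR_lt1 c.
  set m := Num.floor c + k.
  have e : x - c - k%:~R = x - c0 - m%:~R by rewrite /c0 /fracR /m intrD; ring.
  rewrite e ltr_norml in hx; move/andP: hx => [h1 h2].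
  have mlt : m%:~R < 2 :> R by lra.
  have mgt : -2 < m%:~R :> R by lra.
  have mlt' : (m < 2)%R by rewrite -(ltr_int R).
  have mgt' : (-2 < m)%R by rewrite -(ltr_int R) rmorphN.
  have : m = -1 \/ m = 0 \/ m = 1 by lia.
  case=> [em|[em|em]]; rewrite em /= in h1 h2.
  + left; left; rewrite /J /= in_itv /=; apply/andP; split; lra.
  + left; right; rewrite /J /= in_itv /=; apply/andP; split; lra.
  + right; rewrite /J /= in_itv /=; apply/andP; split; lra.
have mJ a : measurable (J a) by exact: measurable_itv.
have mA : (Sball c s `&` `[0%R, 1%R[) \in measurable.
  rewrite inE; apply: measurableI; first exact: Sball_measurable.
  exact: measurable_itv.
have mB : (J (c0 - 1) `|` J c0 `|` J (c0 + 1)) \in measurable.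
  by rewrite inE; apply: measurableU => //; apply: measurableU.
apply: le_trans (le_measure (@lebesgue_measure R) mA mB sub) _.
apply: le_trans (measureU2 _ _ _) _; [by apply: measurableU; apply: mJ|exact: mJ|].
apply: le_trans (leeD (measureU2 _ _ _) (lexx _)) _; [exact: mJ|exact: mJ|].
have hJ a : lebesgue_measure (J a) = (2 * s)%:E.
  by rewrite /J leb_itv_oo; [congr EFin; ring | lra].
apply: (@le_trans _ _ (lebesgue_measure (J (c0-1)%R) + lebesgue_measure (J c0)
   + lebesgue_measure (J (c0+1)%R))%E); first exact: lexx.
rewrite !hJ -!EFinD lee_fin; lra.
Qed.
End Balls.


Section Cover.
Variable R : realType.
Variable G : set R.
Variable g : R -> R.
Hypothesis gmono : forall x y : R, 0 <= x -> x <= y -> g x <= g y.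
Hypothesis g0 : g 0 = 0.

Lemma g_ge0 x : 0 <= x -> 0 <= g x.
Proof. by move=> x0; rewrite -g0; apply: gmono. Qed.

Definition sep (r : R) (N : nat) (c : nat -> R) :=
  (forall i, (i < N)%N -> G (c i)) /\
  (forall i j, (i < N)%N -> (j < N)%N -> i <> j -> 2 * r < dT (c i) (c j)).

Lemma sep_pack (delta r : R) N c : 0 < r -> r <= 2^-1 -> 2 * r < delta ->
  sep r N c -> ((N%:R * g r)%:E <= packing_delta g delta G)%E.
Proof.
move=> r0 r1 rd [cG csep].
set f := fun i => (g (diamT (ballT (c i) r)))%:E.
have f0 i : (0 <= f i)%E by rewrite lee_fin; apply: g_ge0; exact: diamT_ge0.
apply: (@le_trans _ _ (\esum_(i in [set i | (i < N)%N]) f i)).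
  rewrite -nneseries_esum; last by move=> n _; exact: f0.
  apply: le_trans (nneseries_lim_ge N _); last by move=> n _ _; exact: f0.
  rewrite big_nat_cond (eq_bigl (fun i => (0 <= i < N)%N && true)); last first.
    by move=> i /=; case: (i < N)%N; rewrite ?andbF ?andbT.
  rewrite -big_nat_cond.
  apply: (@le_trans _ _ (\sum_(0 <= i < N) (g r)%:E)).
    rewrite sumEFin lee_fin big_const_nat subn0.
    elim: N {cG csep} => [|n IH]; first by rewrite mul0r.
    by rewrite iterS -nat1r mulrDl mul1r lerD2l.
  apply: lee_sum => i _.
  rewrite /f lee_fin; apply: gmono; first exact: ltW.
  exact: diamT_ball_ge (ltW r0) r1.
apply: ereal_sup_ubound; exists [set i | (i < N)%N], c, (fun _ => r); split => //.
- move=> i /= iN; split => //; first exact: cG.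
  by apply: le_lt_trans (diamT_ball_le _ (ltW r0)) _.
- move=> i j /= iN jN ij; apply/seteqP; split => // x [/= h1 h2].
  have := csep i j iN jN ij.
  have := dT_tri (c i) x (c j); rewrite (dTC x (c j)) => h3 h4.
  rewrite /ballT /= in h1 h2; exfalso; lra.
Qed.


Lemma sep_cover (delta r : R) : (forall x, 0 <= x -> g x = 0 -> x = 0) ->
  0 < r -> r <= 2^-1 -> 2 * r < delta -> (packing_delta g delta G < +oo)%E ->
  exists N c, [/\ sep r N c, ((N%:R * g r)%:E <= packing_delta g delta G)%E &
    (forall y, G y -> exists2 i, (i < N)%N & dT y (c i) <= 2 * r)].
Proof.
move=> gpos r0 r1 rd Pfin.
case: (pselect (exists N c, sep r N c /\ (forall y, G y -> exists2 i, (i < N)%N & dT y (c i) <= 2 * r))).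
  move=> [N [c [s hc]]]; exists N, c; split => //; exact: (sep_pack r0 r1 rd s).
move=> H; exfalso.
have all N : exists c, sep r N c.
  elim: N => [|N [c [cG cs]]]; first by exists (fun=> 0); split.
  have [y [Gy hy]] : exists y, G y /\ forall i, (i < N)%N -> 2 * r < dT y (c i).
    apply: contrapT => nh; apply: H; exists N, c; split; first by split.
    move=> y Gy; apply: contrapT => ne; apply: nh; exists y; split => // i iN.
    rewrite ltNge; apply/negP => le; apply: ne; exists i => //.
  exists (fun i => if i == N then y else c i); split.
    move=> i; rewrite ltnS leq_eqVlt; case: eqP => [_ _|_ /= iN]; first by [].
    exact: cG.
  move=> i j iN jN ij.
  have [ei|ei] := eqVneq i N; have [ej|ej] := eqVneq j N.
  - by exfalso; apply: ij; congruence.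
  - rewrite /=; apply: hy.
    by move: jN ej; rewrite ltnS leq_eqVlt => /orP [/eqP ->|//]; rewrite eqxx.
  - rewrite /= dTC; apply: hy.
    by move: iN ei; rewrite ltnS leq_eqVlt => /orP [/eqP ->|//]; rewrite eqxx.
  - rewrite /=; apply: cs => //.
    + by move: iN ei; rewrite ltnS leq_eqVlt => /orP [/eqP ->|//]; rewrite eqxx.
    + by move: jN ej; rewrite ltnS leq_eqVlt => /orP [/eqP ->|//]; rewrite eqxx.
have P0 : (0 <= packing_delta g delta G)%E.
  have [c sc] := all 0%N.
  by apply: le_trans (sep_pack r0 r1 rd sc); rewrite mul0r.
have gr0 : 0 < g r.
  rewrite lt0r g_ge0 ?(ltW r0) // andbT; apply/eqP => e.
  by have := gpos r (ltW r0) e; move=> r00; rewrite r00 ltxx in r0.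
set M := fine (packing_delta g delta G).
have PM : packing_delta g delta G = M%:E.
  by rewrite /M fineK // ge0_fin_numE.
have M0 : 0 <= M by rewrite -lee_fin -PM.
have [c sc] := all (Num.bound (M / g r)).
have := sep_pack r0 r1 rd sc; rewrite PM lee_fin.
have := archi_boundP (divr_ge0 M0 (ltW gr0)).
rewrite ltr_pdivrMr // => h1 h2.
by have := lt_le_trans h1 h2; rewrite ltxx.
Qed.
End Cover.


Section Scale.
Variable R : realType.

Lemma leb_01 : (lebesgue_measure (`[0%R, 1%R[ : set R) = 1)%E.
Proof. by rewrite lebesgue_measure_itv /= lte_fin ltr01 -EFinD subr0. Qed.

Lemma bigcup_ballT_leb (N : nat) (c : nat -> R) (s : R) : 0 < s -> s <= 1 ->
  (lebesgue_measure ((\bigcup_(i < N) Sball (c i) s) `&` `[0%R, 1%R[)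
     <= (N%:R * (6 * s))%:E)%E.
Proof.
move=> s0 s1.
have sub : (\bigcup_(i < N) Sball (c i) s) `&` `[0%R, 1%R[ `<=`
           \bigcup_(i < N) (Sball (c i) s `&` `[0%R, 1%R[).
  by move=> x [[i iN hi] h]; exists i.
have mS i : measurable (Sball (c i) s `&` `[0%R, 1%R[).
  by apply: measurableI; [exact: Sball_measurable|exact: measurable_itv].
have mA : ((\bigcup_(i < N) Sball (c i) s) `&` `[0%R, 1%R[) \in measurable.
  rewrite inE; apply: measurableI; last exact: measurable_itv.
  by apply: bigcup_measurable => i _; exact: Sball_measurable.
have mB : (\bigcup_(i < N) (Sball (c i) s `&` `[0%R, 1%R[)) \in measurable.
  by rewrite inE; apply: bigcup_measurable => i _.
apply: le_trans (le_measure (@lebesgue_measure R) mA mB sub) _.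
rewrite bigcup_mkord.
apply: le_trans (Boole_inequality (@lebesgue_measure R) (fun i _ => mS i)) _.
apply: (@le_trans _ _ (\sum_(i < N) (6 * s)%:E)%E).
  by apply: lee_sum => i _; exact: Sball_leb.
rewrite sumEFin lee_fin big_const_ord.
move: (6 * s) => y.
elim: N {mA mB sub mS} => [|n IH]; first by rewrite mul0r.
by rewrite iterS -nat1r mulrDl mul1r lerD2l.
Qed.


Lemma scale_bound (G : set R) (g : R -> R) : gauge g ->
  (packing_premeasure g G < +oo)%E ->
  exists (K : R) (Bf : R -> set R), 0 <= K /\ forall r, 0 < r -> r <= 1 ->
   [/\ measurable (Bf r), (forall x y, G y -> dT x y < r -> Bf r x) &
       (lebesgue_measure (Bf r `&` `[0%R, 1%R[) <= (K * (r / g r))%:E)%E].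
Proof.
move=> [gmono _ g0 gpos] Pfin.
have [_ [d0 /= d00 <-] Pd] := ereal_inf_lt Pfin.
set Pd0 := packing_delta g d0 G in Pd.
set r0 := Num.min (d0 / 4) (4^-1).
have r00 : 0 < r0 by rewrite /r0 lt_min; apply/andP; split; lra.
have r0d : r0 <= d0 / 4 by rewrite /r0 ge_min lexx.
have r04 : r0 <= 4^-1 by rewrite /r0 ge_min lexx orbT.
have gp x : 0 < x -> 0 < g x.
  move=> x0; rewrite lt0r g_ge0 ?(ltW x0) // andbT; apply/eqP => e.
  by have := gpos x (ltW x0) e => ex; rewrite ex ltxx in x0.
have g1 : 0 < g 1 by apply: gp.
have P0 : (0 <= Pd0)%E.
  have sc : sep G r0 0 (fun=> 0) by split.
  apply: le_trans (sep_pack gmono g0 r00 _ _ sc); first by rewrite mul0r.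
  - lra.
  - lra.
set M := fine Pd0.
have PM : Pd0 = M%:E by rewrite /M fineK // ge0_fin_numE.
have M0 : 0 <= M by rewrite -lee_fin -PM.
exists (18 * M + g 1 / r0).
have H : forall r, exists B : set R, 0 < r -> r <= 1 -> [/\ measurable B,
     (forall x y, G y -> dT x y < r -> B x) &
     (lebesgue_measure (B `&` `[0%R, 1%R[) <=
          ((18 * M + g 1 / r0) * (r / g r))%:E)%E].
  move=> r.
  have [rpos|rneg] := ltP 0 r; last by exists setT => r0'; exfalso; lra.
  have gr := gp r rpos.
  have [rs|rb] := ltP r r0.
  - have [N [c [sc NM cov]]] := sep_cover gmono g0 (delta := d0) gpos rpos
      ltac:(lra) ltac:(lra) Pd.
    exists (\bigcup_(i < N) Sball (c i) (3 * r)) => _ r1; split.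
    + by apply: bigcup_measurable => i _; exact: Sball_measurable.
    + move=> x y Gy hxy; have [i iN hi] := cov y Gy; exists i => //.
      rewrite /Sball /=; apply: le_lt_trans (dT_tri x y (c i)) _; lra.
    + apply: le_trans (bigcup_ballT_leb _ _ _ _) _; [lra|lra|].
      rewrite lee_fin.
      move: NM; rewrite -/Pd0 PM lee_fin => NM.
      have NM' : N%:R <= M / g r by rewrite ler_pdivlMr.
      have h1 : N%:R * (6 * (3 * r)) <= 18 * M * (r / g r).
        have -> : 18 * M * (r / g r) = (M / g r) * (18 * r) by rewrite /=; field; lra.
        have -> : N%:R * (6 * (3 * r)) = N%:R * (18 * r) by ring.
        by apply: ler_wpM2r => //; lra.
      apply: le_trans h1 _; apply: ler_wpM2r; first by apply: divr_ge0; lra.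
      by rewrite lerDl; apply: divr_ge0; lra.
  - exists setT => _ r1; split => //; rewrite setTI leb_01 lee_fin.
    have grg1 : g r <= g 1 by apply: gmono; lra.
    have h : 1 <= g 1 / r0 * (r / g r).
      rewrite mulrA ler_pdivlMr // mul1r -mulrA (mulrC r0^-1) mulrA.
      rewrite ler_pdivlMr // .
      by apply: ler_pM; lra.
    apply: le_trans h _; apply: ler_wpM2r; first by apply: divr_ge0; lra.
    by rewrite lerDr; lra.
have [Bf HB] := choice H.
exists Bf; split; last exact: HB.
by apply: addr_ge0; [lra|apply: divr_ge0; lra].
Qed.
End Scale.


Section Tails.
Variable R : realType.

Lemma ev_lt (u : nat -> \bar R) (e : R) : 0 < e ->
  u n @[n --> \oo] --> 0%E -> exists N, forall n, (N <= n)%N -> (u n < e%:E)%E.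
Proof.
move=> e0 cu.
have : \forall n \near \oo, (u n < e%:E)%E.
  apply: (cu [set y : \bar R | (y < e%:E)%E]); apply/nbhs_EFin => /=.
  by near=> y; rewrite lte_fin; near: y; exact: lt_nbhsl e0.
by move=> [N _ HN]; exists N => n Nn; apply: HN.
Unshelve. all: by end_near.
Qed.

Lemma series_tail (t : nat -> \bar R) : (forall n, (0 <= t n)%E) ->
  (\sum_(n <oo) t n < +oo)%E -> forall e, 0 < e ->
  exists N, forall M, (N <= M)%N -> (\sum_(M <= k <oo) t k < e%:E)%E.
Proof.
move=> t0 fin e e0.
have := nneseries_tail_cvg (P := xpredT) fin (fun k _ => t0 k).
by move/(ev_lt e0).
Qed.

Lemma term_small (t : nat -> \bar R) : (forall n, (0 <= t n)%E) ->
  (\sum_(n <oo) t n < +oo)%E -> forall e, 0 < e ->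
  exists N, forall n, (N <= n)%N -> (t n < e%:E)%E.
Proof.
move=> t0 fin e e0; have [N HN] := series_tail t0 fin e0.
exists N => n Nn; apply: le_lt_trans (HN n Nn).
have := @nneseries_lim_ge R t xpredT n n.+1 (fun k _ _ => t0 k).
by rewrite big_nat1.
Qed.


Lemma haus0 (h : R -> R) (A : set R) (Y rr tw : nat -> R) (Fw : nat -> Prop) :
  (forall x y, 0 <= x -> x <= y -> h x <= h y) -> h 0 = 0 ->
  (forall n, 0 < rr n) ->
  (forall n, 0 <= tw n) -> (forall n, Fw n -> h (2 * rr n) <= tw n) ->
  (forall d, 0 < d -> exists N, forall n, (N <= n)%N -> 2 * rr n <= d) ->
  (forall e, 0 < e -> exists N, forall M, (N <= M)%N ->
      (\sum_(M <= k <oo) (tw k)%:E < e%:E)%E) ->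
  (forall xi, A xi -> forall N, exists n, [/\ (N <= n)%N, Fw n & dT xi (Y n) < rr n]) ->
  hausdorff_measure h A = 0%E.
Proof.
move=> hmono h0 rpos tw0 htw rsmall tail cov.
have hge0 x : 0 <= x -> 0 <= h x by move=> x0; rewrite -h0; apply: hmono.
have Hge0 d : (0 <= hausdorff_delta h d A)%E.
  apply: le_ereal_inf_tmp => _ [U _ <-]; apply: nneseries_ge0 => n _ _.
  by rewrite lee_fin; apply: hge0; exact: diamT_ge0.
apply/eqP; rewrite eq_le; apply/andP; split; last first.
  apply: le_trans (Hge0 1) _; apply: ereal_sup_ubound; exists 1 => //=; lra.
apply: ge_ereal_sup => _ [d /= d0 <-].
apply/lee_addgt0Pr => e e0; rewrite add0e.
have [N1 HN1] := rsmall d d0.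
have [N2 HN2] := tail e e0.
set N := maxn N1 N2.
set U := fun i => [set x | [/\ (N <= i)%N, Fw i & dT x (Y i) < rr i]].
apply: (@le_trans _ _ (\sum_(0 <= i <oo) (h (diamT (U i)))%:E)%E).
  apply: ereal_inf_lbound; exists U => //; split.
    move=> xi Axi; have [n [Nn Fn hn]] := cov xi Axi N; exists n => //.
  move=> i; apply: diamT_le; first lra.
  move=> x y [Ni Fi hx] [_ _ hy].
  have := HN1 i (leq_trans (leq_maxl _ _) Ni).
  have := dT_tri x (Y i) y; rewrite (dTC (Y i) y); lra.
apply: (@le_trans _ _ (\sum_(N <= k <oo) (tw k)%:E)%E); last first.
  by apply: ltW; apply: HN2; exact: leq_maxr.
rewrite [X in (_ <= X)%E]ereal_series [X in (_ <= X)%E]eseries_mkcond.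
apply: lee_nneseries.
  by move=> i _ _; rewrite lee_fin; apply: hge0; exact: diamT_ge0.
move=> i _.
case: (pselect ((N <= i)%N /\ Fw i)) => [[Ni Fi]|nF].
  rewrite Ni lee_fin; apply: le_trans (htw i Fi); apply: hmono.
    exact: diamT_ge0.
  apply: diamT_le; first by have := rpos i; lra.
  move=> x y [_ _ hx] [_ _ hy].
  have := dT_tri x (Y i) y; rewrite (dTC (Y i) y); lra.
have e0' : diamT (U i) = 0.
  apply/eqP; rewrite eq_le diamT_ge0 andbT; apply: diamT_le => //.
  by move=> x y [Ni Fi _]; exfalso; apply: nF.
rewrite e0' h0; case: ifP => _; rewrite lee_fin //.
Qed.
End Tails.


Unset Implicit Arguments. Set Strict Implicit. Set Printing Implicit Defensive.

Theorem theorem3p1 (R : realType) (d : measure_display) (Omega : measurableType d)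
  (P : probability Omega R) (X : nat -> Omega -> R) (r : nat -> R)
  (G : set R) (g : R -> R) :
  (forall n, measurable_fun setT (X n)) ->
  (forall n (A : set R), measurable A ->
     P (X n @^-1` A) = (@lebesgue_measure R) (A `&` `[0%R, 1%R[)) ->
  (forall n, 0 < r n <= 1) ->
  G !=set0 -> compact G ->
  gauge g -> doubling g -> (packing_premeasure g G < +oo)%E ->
  ((\sum_(0 <= n <oo) ((r n / g (r n))%:E) < +oo)%E ->
      {ae P, forall w, Eset (fun n => X n w) r `&` G = set0})
  /\
  (forall h : R -> R, gauge h -> doubling h ->
     (\sum_(0 <= n <oo) ((h (r n) * r n / g (r n))%:E) < +oo)%E ->
      {ae P, forall w, hausdorff_measure h (Eset (fun n => X n w) r `&` G) = 0%E}).
Proof.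
move=> mX Xlaw rb Gne Gcpt ggauge gdoub Pfin.
have [K [Bf [K0 HB]]] := scale_bound ggauge Pfin.
have rp n : 0 < r n by have /andP[] := rb n.
have r1 n : r n <= 1 by have /andP[] := rb n.
have [gmono _ g0 gpos] := ggauge.
have gp x : 0 < x -> 0 < g x.
  move=> x0; rewrite lt0r (g_ge0 gmono g0 (ltW x0)) andbT; apply/eqP => e.
  by have := gpos x (ltW x0) e => ex; rewrite ex ltxx in x0.
set F := fun n => X n @^-1` Bf (r n).
have mF n : measurable (F n).
  have [mB _ _] := HB (r n) (rp n) (r1 n).
  by have := mX n measurableT _ mB; rewrite setTI.
have PF n : (P (F n) <= (K * (r n / g (r n)))%:E)%E.
  have [mB _ lB] := HB (r n) (rp n) (r1 n).
  by rewrite /F Xlaw.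
have covF w xi n : G xi -> dT xi (X n w) < r n -> F n w.
  move=> Gxi hd; have [_ cB _] := HB (r n) (rp n) (r1 n).
  by apply: (cB _ xi Gxi); rewrite dTC.
split.
- move=> sfin.
  exists (lim_sup_set F); split.
  + apply: bigcapT_measurable => n; apply: bigcup_measurable => k _; exact: mF.
  + apply: lim_sup_set_cvg0 => //.
    apply: (@le_lt_trans _ _ (\sum_(n <oo) (K%:E * (r n / g (r n))%:E))%E).
      apply: lee_nneseries => [n _ _|n _]; first exact: measure_ge0.
      by rewrite -EFinM; exact: PF.
    rewrite nneseriesZl; last by move=> n _; rewrite lee_fin divr_ge0 // ltW // gp.
    by apply: lte_mul_pinfty.
  + move=> w /= hw.
    have [xi [Exi Gxi]] : exists xi, Eset (fun n => X n w) r xi /\ G xi.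
      apply: contrapT => nh; apply: hw; apply/seteqP; split => // xi [Exi Gxi].
      by apply: nh; exists xi.
    move=> N _; have [n [Nn hn]] := Exi N; exists n => //.
    exact: covF Gxi hn.
- move=> h [hmono _ h0 hpos] [Ch [Ch0 hdoub]] hsum.
  have hge0 x : 0 <= x -> 0 <= h x by move=> x0; rewrite -h0; apply: hmono.
  have hp x : 0 < x -> 0 < h x.
    move=> x0; rewrite lt0r hge0 ?(ltW x0) // andbT; apply/eqP => e.
    by have := hpos x (ltW x0) e => ex; rewrite ex ltxx in x0.
  set a := fun n => h (2 * r n).
  have a0 n : 0 <= a n by apply: hge0; have := rp n; lra.
  set tw := fun w n => a n * \1_(F n) w.
  have tw0 w n : 0 <= tw w n.
    by apply: mulr_ge0 => //; rewrite indicE ler0n.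
  set fw := fun w => (\sum_(n <oo) (tw w n)%:E)%E.
  have mtw n : measurable_fun setT (fun w => (tw w n)%:E).
    apply/measurable_EFinP; apply: measurable_funM; first exact: measurable_cst.
    exact: measurable_indic.
  have fw0 w : (0 <= fw w)%E.
    by apply: nneseries_ge0 => n _ _; rewrite lee_fin.
  have mfw : measurable_fun setT fw.
    have H := @ge0_emeasurable_sum _ Omega R setT (fun k w => (tw w k)%:E) xpredT
      (fun k x _ _ => tw0 x k) (fun k _ => mtw k).
    exact: H.
  have tn0 n : (0 <= (h (r n) * r n / g (r n))%:E)%E.
    rewrite lee_fin; apply: divr_ge0; last exact/ltW/gp.
    by apply: mulr_ge0; [apply: hge0; exact/ltW|exact/ltW].
  have intf : (\int[P]_(w in setT) fw w < +oo)%E.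
    rewrite /fw integral_nneseries //; last by move=> n w _; rewrite lee_fin.
    apply: (@le_lt_trans _ _
       (\sum_(n <oo) ((Ch * K)%:E * (h (r n) * r n / g (r n))%:E))%E).
      apply: lee_nneseries => [n _ _|n _].
        by apply: integral_ge0 => w _; rewrite lee_fin.
      rewrite /tw (integralZl_indic measurableT (fun _ => F n)) //; last first.
        by move=> an; exfalso; have := a0 n; lra.
      rewrite integral_indic // setIT.
      apply: le_trans (lee_wpmul2l _ (PF n)) _; first by rewrite lee_fin.
      rewrite -!EFinM lee_fin.
      have e1 : a n <= Ch * h (r n) by apply: hdoub.
      have e2 : 0 <= K * (r n / g (r n)).
        by apply: mulr_ge0 => //; apply: divr_ge0; [exact/ltW|exact/ltW/gp].
      apply: le_trans (ler_wpM2r e2 e1) _.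
      apply/eqW'; rewrite /=; field; exact: lt0r_neq0 (gp _ (rp n)).
    rewrite nneseriesZl //; apply: lte_mul_pinfty => //.
    by rewrite lee_fin; apply: mulr_ge0 => //; lra.
  have fint : P.-integrable setT fw.
    apply/integrableP; split => //.
    by under eq_integral => w _ do rewrite gee0_abs //.
  have fae := integrable_ae measurableT fint.
  apply: filterS fae => w Hw.
  have fwfin : (fw w < +oo)%E.
    by have := Hw I; move/fin_numPlt => /andP [].
  apply: (haus0 (Y := fun n => X n w) (rr := r) (tw := tw w)
                (Fw := fun n => F n w)) => //.
  + move=> n Fn; rewrite /tw indicE mem_set // mulr1 //.
  + move=> dd dd0.
    set rho := Num.min (dd / 2) 1.
    have rho0 : 0 < rho by rewrite /rho lt_min; apply/andP; split; lra.
    have rhod : rho <= dd / 2 by rewrite /rho ge_min lexx.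
    have rho1 : rho <= 1 by rewrite /rho ge_min lexx orbT.
    have g1 : 0 < g 1 by apply: gp.
    have eta0 : 0 < h rho * rho / g 1.
      by apply: divr_gt0 => //; apply: mulr_gt0 => //; exact: hp.
    have [N HN] := term_small tn0 hsum eta0.
    exists N => n Nn; have := HN n Nn; rewrite lte_fin => hn.
    suff : r n < rho by lra.
    rewrite ltNge; apply/negP => rhon.
    have grn : 0 < g (r n) by apply: gp.
    have hrn : h rho <= h (r n) by apply: hmono => //; exact/ltW.
    have grg : g (r n) <= g 1 by apply: gmono => //; exact/ltW.
    have : h rho * rho / g 1 <= h (r n) * r n / g (r n).
      apply: (@le_trans _ _ (h (r n) * r n / g 1)).
        apply: ler_wpM2r; first by rewrite invr_ge0; exact/ltW.
        by apply: ler_pM => //; [exact/ltW/hp|exact/ltW].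
      apply: ler_wpM2l; first by apply: mulr_ge0; [exact/ltW/hp|exact/ltW].
      by rewrite lef_pV2 // posrE.
    lra.
  + have := series_tail (t := fun n => (tw w n)%:E) (fun n => tw0 w n) fwfin.
    by move=> H e e0; have [N HN] := H e e0; exists N.
  + move=> xi [Exi Gxi] N; have [n [Nn hn]] := Exi N.
    by exists n; split => //; exact: covF hn.
Qed.
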